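(* For every $r\ge 1$ and $k\ge 1$ there exists $n_0=n_0(r,k)$ such that for every $n>n_0$ the following holds. Let $[n]^r$ denote the complete $r$-partite $r$-uniform hypergraph with $r$ disjoint sides $V_1,\ldots,V_r$, each of size $n$, whose edges are all $r$-sets meeting each $V_j$ in exactly one vertex. If $F_1,\ldots,F_k\subseteq [n]^r$ satisfy $|F_i|>(k-1)n^{r-1}$ for all $i\le k$, then there exist pairwise disjoint edges $e_1,\ldots,e_k$ with $e_i\in F_i$ for every $i$ (a rainbow matching).
   Context: A rainbow matching for a collection $(F_1,\ldots,F_k)$ of hypergraphs is a choice of pairwise disjoint edges $e_i\in F_i$, one from each $F_i$. *)

(* Defs.v *)
From mathcomp Require Import all_boot.
Set Implicit Arguments. Unset Strict Implicit. Unset Printing Implicit Defensive.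

(* Vertex set: 'I_r * 'I_n, the pair (j, v) being vertex v of side V_j.
   An edge meets each side in exactly one vertex, so it is determined by
   a function f : 'I_r -> 'I_n; its vertex set is {(j, f j) | j}. *)
Definition rpart_edge (r n : nat) := {ffun 'I_r -> 'I_n}.

Definition edge_vertices (r n : nat) (e : rpart_edge r n) : {set 'I_r * 'I_n} :=
  [set (j, e j) | j : 'I_r].

Definition disjoint_edges (r n : nat) (e f : rpart_edge r n) : bool :=
  [disjoint edge_vertices e & edge_vertices f].

Definition rainbow_matching (r n k : nat) (F : 'I_k -> {set rpart_edge r n})
    (e : 'I_k -> rpart_edge r n) : Prop :=
  (forall i, e i \in F i) /\
  (forall i j, i != j -> disjoint_edges (e i) (e j)).

(* Main.v *)
Require Import Defs.
From mathcomp Require Import all_boot zify.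
Set Implicit Arguments. Unset Strict Implicit.
Lemma card_star r n (j : 'I_r) (v : 'I_n) : #|[set f : rpart_edge r n | f j == v]| = n^(r-1).
Proof.
rewrite (@eq_card _ _ (family (fun l : 'I_r => if l == j then pred1 v else predT))); last first.
  move=> f; rewrite inE; apply/eqP/familyP => [<- l|H]; first by case: eqP => // ->; rewrite inE.
  by have := H j; rewrite eqxx inE => /eqP.
rewrite card_family foldrE big_map big_enum /= (bigD1 j) //= eqxx card1 mul1n.
rewrite (eq_bigr (fun _ => n)); last by move=> l /negbTE ->; rewrite card_ord.
rewrite prod_nat_const; congr (_ ^ _); rewrite subn1; have -> : r.-1 = #|predC1 j| by rewrite cardC1 card_ord. by apply: eq_card => i; rewrite !inE. Qed.
Lemma card_star2 r n (j l : 'I_r) (v w : 'I_n) : j != l -> #|[set f : rpart_edge r n | (f j == v) && (f l == w)]| = n^(r-2).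
Proof.
move=> jl.
rewrite (@eq_card _ _ (family (fun x : 'I_r => if x == j then pred1 v else if x == l then pred1 w else predT))); last first.
  move=> f; rewrite inE; apply/andP/familyP => [[/eqP <- /eqP <-] x|H].
    by case: eqP => [->|_]; [rewrite inE | case: eqP => [->|_]; rewrite ?inE].
  have := H j; have := H l; rewrite eqxx (negbTE jl) eq_sym (negbTE jl) eqxx. by rewrite !inE => -> ->.
rewrite card_family foldrE big_map big_enum /= (bigD1 j) //= eqxx card1 mul1n.
rewrite (bigD1 l) //= ; last by rewrite eq_sym.
rewrite eq_sym (negbTE jl) eqxx card1 mul1n.
rewrite (eq_bigr (fun _ => n)); last by move=> x /andP[/negbTE -> /negbTE ->]; rewrite card_ord.
rewrite prod_nat_const. congr (_ ^ _).
have -> : r - 2 = #|~: [set j; l]| by have := cardsC [set j; l]; rewrite cards2 jl card_ord; lia.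
by apply: eq_card => x; rewrite !inE negb_or.
Qed.


Lemma card_bigcup_le (I T : finType) (P : pred I) (A : I -> {set T}) :
  #|\bigcup_(i | P i) A i| <= \sum_(i | P i) #|A i|.
Proof.
elim/big_rec2: _ => [|i B s Pi IH]; first by rewrite cards0.
by rewrite (leq_trans (leq_card_setU _ _)) // leq_add2l.
Qed.

Lemma sum_const_le (I : finType) (P : pred I) (c : nat) :
  \sum_(i | P i) c <= #|I| * c.
Proof. by rewrite sum_nat_const leq_mul2r max_card orbT. Qed.

Definition disj r n (f g : rpart_edge r n) := [forall l, f l != g l].

Lemma disjointE r n (f g : rpart_edge r n) : disjoint_edges f g = disj f g.
Proof.
rewrite /disjoint_edges /disj; apply/idP/idP.
- move=> H; apply/forallP => l; apply/eqP => E.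
  have hf : (l, f l) \in edge_vertices f by apply/imsetP; exists l.
  have hg : (l, f l) \in edge_vertices g by apply/imsetP; exists l; rewrite ?E.
  by rewrite (disjointFr H hf) in hg.
- move=> /forallP H; apply/pred0P => x /=; apply/negbTE/andP.
  move=> [/imsetP [l _ ->] /imsetP [l' _ [El Ef]]].
  by subst l'; move: (H l); rewrite Ef eqxx.
Qed.

Lemma disj_sym r n (f g : rpart_edge r n) : disj f g = disj g f.
Proof. by apply/forallP/forallP => H l; rewrite eq_sym. Qed.

Lemma extend r n k (F : 'I_k.+1 -> {set rpart_edge r n}) (p : 'I_k.+1) g
  (e' : 'I_k -> rpart_edge r n) :
  g \in F p -> (forall i, e' i \in F (lift p i)) ->
  (forall i j, i != j -> disj (e' i) (e' j)) -> (forall i, disj g (e' i)) ->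
  exists e, rainbow_matching F e.
Proof.
move=> gF eF ed gd.
exists (fun i => if unlift p i is Some i' then e' i' else g); split.
  by move=> i; case: unliftP => [i' ->|->].
move=> i j; rewrite disjointE.
case: unliftP => [i' ->|->]; case: unliftP => [j' ->|->] //.
- by move=> ne; apply: ed; apply: contraNneq ne => ->.
- by rewrite disj_sym.
- by rewrite eqxx.
Qed.

Lemma main r n D G k :
  (forall (j : 'I_r) (v : 'I_n), #|[set f : rpart_edge r n | f j == v]| <= D) ->
  (forall (j l : 'I_r) (v w : 'I_n), j != l ->
     #|[set f : rpart_edge r n | (f j == v) && (f l == w)]| <= G) ->
  r * (r * (k - 1) * G) <= D ->
  forall F : 'I_k -> {set rpart_edge r n},
    (forall i, (k - 1) * D < #|F i|) -> exists e, rainbow_matching F e.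
Proof.
move=> hD hG; elim: k => [|k IH] hk F hF.
  have e0 : 'I_0 -> rpart_edge r n by case=> m; rewrite ltn0.
  by exists e0; split=> i; exfalso; case: i => m; rewrite ltn0.
rewrite subSS subn0 in hk hF.
have hk' : r * (r * (k - 1) * G) <= D.
  apply: leq_trans hk.
  exact: leq_mul (leqnn _) (leq_mul (leq_mul (leqnn _) (leq_subr _ _)) (leqnn _)).
have Dk : forall i : 'I_k, k * D = (k-1)*D + D.
  move=> i; have k0 : 0 < k := leq_ltn_trans (leq0n i) (ltn_ord i).
  by rewrite -{1}(subnK k0) mulnDl mul1n.
case: (boolP [exists p, exists j, exists v, r * k * G < #|[set f in F p | f j == v]|]).
- case/existsP=> p /existsP [j /existsP [v big]].
  pose S := [set f : rpart_edge r n | f j == v].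
  pose F' := fun i => F (lift p i) :\: S.
  have hF' : forall i, (k - 1) * D < #|F' i|.
    move=> i; have := cardsID S (F (lift p i)).
    have := subset_leq_card (subsetIr (F (lift p i)) S).
    have := hD j v; have := hF (lift p i); rewrite (Dk i) /F' /S; move=> h1 h2 h3 h4; rewrite -h4 in h1; move: ((k - 1) * D) h1 => X h1; rewrite -(ltn_add2r D); apply: (leq_trans h1); rewrite addnC leq_add2l; exact: leq_trans h3 h2.
  have [e' [e'F e'd]] := IH hk' F' hF'.
  pose B := \bigcup_(i < k) \bigcup_(l | l != j)
              [set f : rpart_edge r n | (f j == v) && (f l == e' i l)].
  have cB : #|B| <= r * k * G.
    rewrite /B.
    apply: leq_trans (card_bigcup_le (fun i : 'I_k => true) _) _.
    apply: (@leq_trans (\sum_(i < k) \sum_(l | l != j) G)).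
      apply: leq_sum => i _.
      apply: leq_trans (card_bigcup_le (fun l : 'I_r => l != j) _) _.
      by apply: leq_sum => l hl; apply: hG; rewrite eq_sym.
    apply: (@leq_trans (\sum_(i < k) (r * G))).
      by apply: leq_sum => i _; apply: leq_trans (sum_const_le _ _) _; rewrite card_ord.
    by rewrite sum_nat_const card_ord mulnA [k * r]mulnC.
  have : 0 < #|[set f in F p | f j == v] :\: B|.
    rewrite cardsD subn_gt0.
    apply: leq_ltn_trans (subset_leq_card (subsetIr _ B)) _.
    exact: leq_ltn_trans cB big.
  case/card_gt0P => g /setDP [gS gB].
  move: gS; rewrite inE => /andP [gF /eqP gj].
  have e'F2 : forall i, e' i \in F (lift p i).
    by move=> i; have := e'F i; rewrite inE => /andP [].
  apply: (extend gF e'F2) => [i i' ne|i]; first by rewrite -disjointE; apply: e'd.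
  apply/forallP => l; case: (eqVneq l j) => [->|lj].
    by have := e'F i; rewrite !inE gj eq_sym => /andP [].
  apply/eqP => E; move/negP: gB; apply.
  apply/bigcupP; exists i => //; apply/bigcupP; exists l => //.
  by rewrite inE gj E !eqxx.
- rewrite negb_exists => /forallP small.
  have sm : forall p j v, #|[set f in F p | f j == v]| <= r * k * G.
    move=> p j v; move: (small p); rewrite negb_exists => /forallP /(_ j).
    by rewrite negb_exists => /forallP /(_ v); rewrite -leqNgt.
  have : 0 < #|F ord0| by apply: leq_ltn_trans (hF ord0).
  case/card_gt0P => g gF.
  pose F' := fun i => [set f in F (lift ord0 i) | disj g f].
  have hF' : forall i, (k - 1) * D < #|F' i|.
    move=> i.
    have sub : F (lift ord0 i) :\: F' i \subset
               \bigcup_(l < r) [set f in F (lift ord0 i) | f l == g l].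
      apply/subsetP => f; rewrite !inE => /andP [nd fF].
      rewrite fF /= in nd; move/forallPn: nd => [l /negPn gl].
      by apply/bigcupP; exists l => //; rewrite inE fF eq_sym.
    have c1 : #|\bigcup_(l < r) [set f in F (lift ord0 i) | f l == g l]| <= D.
      apply: leq_trans (card_bigcup_le (fun l : 'I_r => true) _) _.
      apply: (@leq_trans (\sum_(l < r) (r * k * G))).
        by apply: leq_sum => l _; apply: sm.
      by rewrite sum_nat_const card_ord.
    have h4 := cardsID (F' i) (F (lift ord0 i)).
    have h3 := subset_leq_card (subsetIr (F (lift ord0 i)) (F' i)).
    have h1 := hF (lift ord0 i); rewrite (Dk i) -h4 in h1.
    have h5 := leq_trans (subset_leq_card sub) c1.
    rewrite -(ltn_add2r D); apply: (leq_trans h1).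
    exact: leq_add h3 h5.
  have [e' [e'F e'd]] := IH hk' F' hF'.
  have e'F2 : forall i, e' i \in F (lift ord0 i).
    by move=> i; have := e'F i; rewrite inE => /andP [].
  apply: (extend gF e'F2) => [i i' ne|i]; first by rewrite -disjointE; apply: e'd.
  by have := e'F i; rewrite inE => /andP [].
Qed.

Theorem theorem9p1 (r k : nat) : 1 <= r -> 1 <= k ->
  exists n0 : nat, forall n : nat, n0 < n ->
    forall F : 'I_k -> {set rpart_edge r n},
      (forall i, (k - 1) * n ^ (r - 1) < #|F i|) ->
      exists e : 'I_k -> rpart_edge r n, rainbow_matching F e.
Proof.
move=> r1 k1; exists (r * r * k) => n hn F hF.
have hD : forall (j : 'I_r) (v : 'I_n), #|[set f : rpart_edge r n | f j == v]| <= n ^ (r - 1).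
  by move=> j v; rewrite card_star.
case: (boolP (1 < r)) => r2.
- apply: (@main r n (n ^ (r - 1)) (n ^ (r - 2)) k hD) => //.
    by move=> j l v w jl; rewrite card_star2.
  have -> : r - 1 = (r - 2).+1 by rewrite -subSn // subSS subn1.
  rewrite expnS mulnA leq_mul2r; apply/orP; right.
  apply: leq_trans (ltnW hn).
  by rewrite mulnA leq_mul2l leq_subr orbT.
- apply: (@main r n (n ^ (r - 1)) 0 k hD) => //.
  + move=> j l v w jl; exfalso; move: jl.
    have r1' : r = 1 by apply/eqP; rewrite eqn_leq r1 andbT leqNgt.
    by subst r; rewrite (ord1 j) (ord1 l) eqxx.
  + by rewrite muln0 muln0.
Qed.
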